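(* Let $\mathcal H$ be a real Hilbert space, $k\ge1$, and let $\mathbf{x}_1,\ldots,\mathbf{x}_k\in\mathcal H$ be norm one vectors with $\dim(\operatorname{span}\{\mathbf{x}_1,\ldots,\mathbf{x}_k\})\le 2$. Then there is a nonzero continuous symmetric $k$-linear form $T$ on $\mathcal H$ attaining its norm at $(\mathbf{x}_1,\ldots,\mathbf{x}_k)$.
   Context: $\|T\|=\sup\{|T(\mathbf{w}_1,\ldots,\mathbf{w}_k)|:\|\mathbf{w}_i\|\le1\}$, and $T$ attains its norm at $(\mathbf{x}_1,\ldots,\mathbf{x}_k)$ if $|T(\mathbf{x}_1,\ldots,\mathbf{x}_k)|=\|T\|$. *)

(* Defs.v *)
From HB Require Import structures.
From mathcomp Require Import all_boot all_order all_algebra all_fingroup.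
From mathcomp Require Import all_classical all_reals all_analysis.
Set Implicit Arguments. Unset Strict Implicit. Unset Printing Implicit Defensive.
Import Order.TTheory GRing.Theory Num.Theory.
Import numFieldNormedType.Exports.
Local Open Scope ring_scope.
Local Open Scope classical_set_scope.

Section Defs.
Variables (R : realType) (V : normedModType R).

Definition inner_product_of_norm (ip : V -> V -> R) : Prop :=
  (forall x y, ip x y = ip y x) /\
  (forall (a : R) x y z, ip (a *: x + y) z = a * ip x z + ip y z) /\
  (forall x, `|x| = Num.sqrt (ip x x)).

Definition upd (k : nat) (w : 'I_k -> V) (i : 'I_k) (v : V) : 'I_k -> V :=
  fun j => if j == i then v else w j.

Definition kmultilinear (k : nat) (T : ('I_k -> V) -> R) : Prop :=
  forall (w : 'I_k -> V) (i : 'I_k) (a : R) (u v : V),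
    T (upd w i (a *: u + v)) = a * T (upd w i u) + T (upd w i v).

Definition ksymmetric_form (k : nat) (T : ('I_k -> V) -> R) : Prop :=
  forall (s : 'S_k) (w : 'I_k -> V), T (fun i => w (s i)) = T w.

Definition kcontinuous_form (k : nat) (T : ('I_k -> V) -> R) : Prop :=
  forall (w : 'I_k -> V) (e : R), 0 < e -> exists2 d : R, 0 < d &
    forall v : 'I_k -> V, (forall i, `|v i - w i| < d) -> `|T v - T w| < e.

Definition kform_norm (k : nat) (T : ('I_k -> V) -> R) : R :=
  sup [set r | exists w : 'I_k -> V, (forall i, `|w i| <= 1) /\ r = `|T w|].

Definition attains_norm_at (k : nat) (T : ('I_k -> V) -> R) (x : 'I_k -> V) : Prop :=
  `|T x| = kform_norm T.

Definition span_dim_le2 (k : nat) (x : 'I_k -> V) : Prop :=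
  exists u1 u2 : V, forall i, exists a b : R, x i = a *: u1 + b *: u2.

End Defs.

(* Main.v *)
Require Import Defs.
From HB Require Import structures.
From mathcomp Require Import all_boot all_order all_algebra all_fingroup.
From mathcomp Require Import all_classical all_reals all_analysis.
From mathcomp Require Import ring lra.
Import Order.TTheory GRing.Theory Num.Theory.
Import numFieldNormedType.Exports.
Local Open Scope ring_scope.

Definition zmul {R : comRingType} (p q : R * R) : R * R :=
  (p.1 * q.1 - p.2 * q.2, p.1 * q.2 + p.2 * q.1).

Lemma zmulA (R : comRingType) : associative (@zmul R).
Proof. by move=> [a b] [c d] [e f]; rewrite /zmul /=; congr pair; ring. Qed.
Lemma zmulC (R : comRingType) : commutative (@zmul R).
Proof. by move=> [a b] [c d]; rewrite /zmul /=; congr pair; ring. Qed.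
Lemma zmul1 (R : comRingType) : left_id (1, 0) (@zmul R).
Proof. by move=> [a b]; rewrite /zmul /=; congr pair; ring. Qed.

HB.instance Definition _ (R : comRingType) :=
  Monoid.isComLaw.Build (R * R)%type (1, 0) (@zmul R) (@zmulA R) (@zmulC R) (@zmul1 R).

Definition zN {R : comRingType} (p : R * R) : R := p.1 ^+ 2 + p.2 ^+ 2.

Lemma zNM (R : comRingType) (p q : R * R) : zN (zmul p q) = zN p * zN q.
Proof. by case: p q => [a b] [c d]; rewrite /zN /zmul /=; ring. Qed.

Section S.
Variables (R : realType) (H : normedModType R) (ip : H -> H -> R)
  (hip : inner_product_of_norm ip).

Lemma ipC x y : ip x y = ip y x. Proof. by case: hip. Qed.
Lemma ipL a x y z : ip (a *: x + y) z = a * ip x z + ip y z.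
Proof. by case: hip => _ []. Qed.
Lemma ip0l z : ip 0 z = 0.
Proof.
have := ipL 1 0 0 z; rewrite scaler0 addr0 mul1r => h; lra.
Qed.
Lemma ipZl a x z : ip (a *: x) z = a * ip x z.
Proof. by have := ipL a x 0 z; rewrite addr0 ip0l addr0. Qed.
Lemma ipDl x y z : ip (x + y) z = ip x z + ip y z.
Proof. by have := ipL 1 x y z; rewrite scale1r mul1r. Qed.
Lemma ipBl x y z : ip (x - y) z = ip x z - ip y z.
Proof. by rewrite ipDl -scaleN1r ipZl mulN1r. Qed.
Lemma ip0r z : ip z 0 = 0. Proof. by rewrite ipC ip0l. Qed.
Lemma ipZr a x z : ip z (a *: x) = a * ip z x.
Proof. by rewrite ipC ipZl ipC. Qed.
Lemma ipDr x y z : ip z (x + y) = ip z x + ip z y.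
Proof. by rewrite ipC ipDl !(ipC z). Qed.
Lemma ipBr x y z : ip z (x - y) = ip z x - ip z y.
Proof. by rewrite ipC ipBl !(ipC z). Qed.
Lemma ipn x : `|x| = Num.sqrt (ip x x). Proof. by case: hip => _ []. Qed.
Lemma ip_ge0 x : 0 <= ip x x.
Proof.
rewrite leNgt; apply/negP => hlt.
have : `|x| = 0 by rewrite ipn; apply/eqP; rewrite sqrtr_eq0 ltW.
move/eqP; rewrite normr_eq0 => /eqP x0.
by move: hlt; rewrite x0 ip0l ltxx.
Qed.
Lemma ip_norm x : ip x x = `|x| ^+ 2.
Proof. by rewrite ipn sqr_sqrtr // ip_ge0. Qed.

Definition good (e : H) := ip e e = 1 \/ e = 0.

Lemma good_fix w e : good e -> ip w e * ip e e = ip w e.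
Proof. by case=> [->|->]; rewrite ?mulr1 // ip0r mul0r. Qed.

Lemma good_cc e : good e -> ip e e * ip e e = ip e e.
Proof. by case=> [->|->]; rewrite ?mulr1 // ip0r mul0r. Qed.

Lemma expand2 w a b e1 e2 :
  ip (w - (a *: e1 + b *: e2)) (w - (a *: e1 + b *: e2)) =
  ip w w - 2 * a * ip w e1 - 2 * b * ip w e2 + a ^+ 2 * ip e1 e1
  + b ^+ 2 * ip e2 e2 + 2 * a * b * ip e1 e2.
Proof.
rewrite !ipBl !ipDl !ipZl !ipBr !ipDr !ipZr (ipC e1 w) (ipC e2 w) (ipC e2 e1).
ring.
Qed.

Lemma bessel w e1 e2 : good e1 -> good e2 -> ip e1 e2 = 0 ->
  ip w e1 ^+ 2 + ip w e2 ^+ 2 <= ip w w.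
Proof.
move=> g1 g2 o.
have := ip_ge0 (w - (ip w e1 *: e1 + ip w e2 *: e2)).
rewrite expand2 o mulr0 addr0.
have h1 := @good_fix w _ g1; have h2 := @good_fix w _ g2.
have -> : ip w e1 ^+ 2 * ip e1 e1 = ip w e1 ^+ 2 by rewrite expr2 -mulrA h1.
have -> : ip w e2 ^+ 2 * ip e2 e2 = ip w e2 ^+ 2 by rewrite expr2 -mulrA h2.
rewrite !expr2; lra.
Qed.

Lemma good0 : good 0. Proof. by right. Qed.

Lemma ip_le w e : good e -> `|ip w e| <= `|w|.
Proof.
move=> g; have := @bessel w e 0 g good0 (ip0r e).
rewrite ip0r expr0n /= addr0 ip_norm => h.
rewrite -ler_sqr ?nnegrE //; by rewrite real_normK ?num_real.
Qed.


Section Cont.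
Variable k : nat.
Definition kc (f : ('I_k -> H) -> R) := kcontinuous_form f.

Lemma kc_ext f g : (forall w, f w = g w) -> kc f -> kc g.
Proof.
move=> fg hf w e e0; have [d d0 hd] := hf w e e0; exists d => // v hv.
by rewrite -!fg; apply: hd.
Qed.

Lemma kc_const a : kc (fun _ => a).
Proof. by move=> w e e0; exists 1 => // v _; rewrite subrr normr0. Qed.

Lemma kc_add f g : kc f -> kc g -> kc (fun w => f w + g w).
Proof.
move=> hf hg w e e0.
have e2 : 0 < e / 2 by rewrite divr_gt0.
have [d1 d10 h1] := hf w _ e2; have [d2 d20 h2] := hg w _ e2.
exists (Num.min d1 d2); first by rewrite lt_min d10 d20.
move=> v hv.
have a1 : `|f v - f w| < e / 2 by apply: h1 => i; have := hv i; rewrite lt_min => /andP[].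
have a2 : `|g v - g w| < e / 2 by apply: h2 => i; have := hv i; rewrite lt_min => /andP[].
have -> : f v + g v - (f w + g w) = (f v - f w) + (g v - g w) by ring.
apply: (le_lt_trans (ler_normD _ _)); lra.
Qed.

Lemma kc_mul f g : kc f -> kc g -> kc (fun w => f w * g w).
Proof.
move=> hf hg w e e0.
set A := `|f w|; set B := `|g w|.
have A0 : 0 <= A by rewrite normr_ge0.
have B0 : 0 <= B by rewrite normr_ge0.
have ea : 0 < e / (2 * (B + 1)) by rewrite divr_gt0 // mulr_gt0 // ltr_wpDl.
have eb0 : 0 < e / (2 * (A + 1)) by rewrite divr_gt0 // mulr_gt0 // ltr_wpDl.
have eb : 0 < Num.min 1 (e / (2 * (A + 1))) by rewrite lt_min ltr01 eb0.
have [d1 d10 h1] := hf w _ ea; have [d2 d20 h2] := hg w _ eb.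
exists (Num.min d1 d2); first by rewrite lt_min d10 d20.
move=> v hv.
have a1 : `|f v - f w| < e / (2 * (B + 1)).
  by apply: h1 => i; have := hv i; rewrite lt_min => /andP[].
have a2 : `|g v - g w| < Num.min 1 (e / (2 * (A + 1))).
  by apply: h2 => i; have := hv i; rewrite lt_min => /andP[].
move: a2; rewrite lt_min => /andP[a21 a22].
have gv : `|g v| <= B + 1.
  have -> : g v = (g v - g w) + g w by ring.
  apply: (le_trans (ler_normD _ _)); rewrite /B; lra.
have -> : f v * g v - f w * g w = (f v - f w) * g v + f w * (g v - g w) by ring.
apply: (le_lt_trans (ler_normD _ _)); rewrite !normrM.
have k1 : `|f v - f w| * `|g v| < e / (2 * (B + 1)) * (B + 1).
  apply: (le_lt_trans (y := `|f v - f w| * (B + 1))).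
    by apply: ler_wpM2l => //; exact: normr_ge0.
  by rewrite ltr_pM2r ?a1 // ltr_wpDl.
have k2 : A * `|g v - g w| <= (A + 1) * (e / (2 * (A + 1))).
  apply: ler_pM; [exact: A0|exact: normr_ge0|rewrite /A; lra|exact: ltW].
have k1e : e / (2 * (B + 1)) * (B + 1) = e / 2.
  by field; rewrite lt0r_neq0 // ltr_wpDl.
have k2e : (A + 1) * (e / (2 * (A + 1))) = e / 2.
  by field; rewrite lt0r_neq0 // ltr_wpDl.
rewrite -/A; lra.
Qed.

Lemma kc_coord i e : good e -> kc (fun w => ip (w i) e).
Proof.
move=> g w eps e0; exists eps => // v hv.
by rewrite -ipBl; apply: (le_lt_trans (@ip_le _ e g)).
Qed.
End Cont.

Definition nz (u : H) : H := `|u|^-1 *: u.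

Lemma nzK u : `|u| *: nz u = u.
Proof.
rewrite /nz scalerA; have [->|u0] := eqVneq u 0; first by rewrite scaler0.
by rewrite mulfV ?scale1r // normr_eq0.
Qed.

Lemma nz_good u : good (nz u).
Proof.
have [->|u0] := eqVneq u 0; first by right; rewrite /nz scaler0.
left; rewrite /nz ipZl ipZr ip_norm.
by field; rewrite normr_eq0.
Qed.

Section Main.
Variables (k : nat) (e1 e2 : H).
Hypotheses (g1 : good e1) (g2 : good e2) (o12 : ip e1 e2 = 0).

Definition zf (w : H) : R * R := (ip w e1, ip w e2).
Definition Z (w : 'I_k -> H) := \big[zmul/(1, 0)]_(i < k) zf (w i).

Lemma zf_le w : zN (zf w) <= ip w w.
Proof. exact: bessel. Qed.

Lemma zf_span a b : zN (zf (a *: e1 + b *: e2)) = ip (a *: e1 + b *: e2) (a *: e1 + b *: e2).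
Proof.
have c1 := @good_cc e1 g1; have c2 := @good_cc e2 g2.
have o21 : ip e2 e1 = 0 by rewrite ipC.
rewrite /zN /zf /= !ipDl !ipZl !ipDr !ipZr o12 o21.
apply/eqP; rewrite -subr_eq0.
set p := ip e1 e1 in c1 *; set q := ip e2 e2 in c2 *.
have -> : (a * p + b * 0) ^+ 2 + (a * 0 + b * q) ^+ 2 -
   (a * (a * p + b * 0) + b * (a * 0 + b * q)) = a ^+ 2 * (p * p - p) + b ^+ 2 * (q * q - q) by ring.
by rewrite c1 c2 !subrr !mulr0 addr0.
Qed.

Lemma NZ w : zN (Z w) = \prod_(i < k) zN (zf (w i)).
Proof.
rewrite /Z; apply: (big_morph zN (@zNM R)).
by rewrite /zN /= expr1n expr0n addr0.
Qed.

Lemma Zperm (s : 'S_k) w : Z (fun i => w (s i)) = Z w.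
Proof. by rewrite /Z [RHS](reindex_inj (@perm_inj _ s)). Qed.

Lemma Zupd w i y : Z (upd w i y) =
  zmul (zf y) (\big[zmul/(1, 0)]_(j < k | j != i) zf (w j)).
Proof.
rewrite /Z (bigD1 i) //=; rewrite /upd eqxx; congr zmul.
by apply: eq_bigr => j hj; rewrite (negbTE hj).
Qed.

Lemma kcZ (r : seq 'I_k) :
  kc k (fun w => (\big[zmul/(1, 0)]_(j <- r) zf (w j)).1) /\
  kc k (fun w => (\big[zmul/(1, 0)]_(j <- r) zf (w j)).2).
Proof.
elim: r => [|j r [IH1 IH2]].
  split; [apply: (@kc_ext k (fun _ => 1)) | apply: (@kc_ext k (fun _ => 0))];
    try exact: kc_const; by move=> w; rewrite big_nil.
split.
  apply: (@kc_ext k (fun w => ip (w j) e1 * (\big[zmul/(1, 0)]_(j <- r) zf (w j)).1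
                + ((-1) * ip (w j) e2) * (\big[zmul/(1, 0)]_(j <- r) zf (w j)).2)).
    by move=> w; rewrite big_cons /zmul /=; ring.
  apply: kc_add; apply: kc_mul => //; first exact: kc_coord.
  by apply: kc_mul; [exact: kc_const|exact: kc_coord].
apply: (@kc_ext k (fun w => ip (w j) e1 * (\big[zmul/(1, 0)]_(j <- r) zf (w j)).2
              + ip (w j) e2 * (\big[zmul/(1, 0)]_(j <- r) zf (w j)).1)).
  by move=> w; rewrite big_cons /zmul /=; ring.
by apply: kc_add; apply: kc_mul => //; exact: kc_coord.
Qed.

End Main.

Lemma main_lemma (k : nat) (x : 'I_k -> H)
    (hx : forall i, `|x i| = 1) (hspan : span_dim_le2 x) :
  exists T : ('I_k -> H) -> R,
    kmultilinear T /\ ksymmetric_form T /\ kcontinuous_form T /\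
    (exists w : 'I_k -> H, T w <> 0) /\ attains_norm_at T x.
Proof.
case: hspan => u1 [u2 hu].
have [e1 [g1 he1]] : exists e1, good e1 /\ `|u1| *: e1 = u1.
  by exists (nz u1); split; [exact: nz_good | exact: nzK].
pose p := ip u2 e1. pose v := u2 - p *: e1.
have [e2 [g2 [he2 he2']]] : exists e2, good e2 /\ `|v| *: e2 = v /\ e2 = `|v|^-1 *: v.
  by exists (nz v); split; [exact: nz_good | split; [exact: nzK | by []]].
have o12 : ip e1 e2 = 0.
  rewrite he2' ipZr /v ipBr ipZr (ipC e1 u2) -/p.
  by rewrite (@good_fix u2 e1 g1) subrr mulr0.
have xspan : forall i, exists a b, x i = a *: e1 + b *: e2.
  move=> i; have [a [b ->]] := hu i.
  exists (a * `|u1| + b * p), (b * `|v|).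
  have hu2 : u2 = `|v| *: e2 + p *: e1 by rewrite he2 /v subrK.
  rewrite {1}hu2 -{1}he1 scalerDr !scalerA scalerDl.
  by rewrite addrA addrAC.
have Nx : forall i, zN (zf e1 e2 (x i)) = 1.
  move=> i; have [a [b E]] := xspan i.
  by rewrite E zf_span // -E ip_norm hx expr1n.
pose Zx := Z k e1 e2 x.
have NZx : zN Zx = 1 by rewrite /Zx NZ; apply: big1 => i _; exact: Nx.
pose T := fun w => Zx.1 * (Z k e1 e2 w).1 + Zx.2 * (Z k e1 e2 w).2.
have Tx : T x = 1 by rewrite /T -NZx /zN !expr2.
have Tle : forall w, (forall i, `|w i| <= 1) -> `|T w| <= 1.
  move=> w hw.
  have hZ : zN (Z k e1 e2 w) <= 1.
    rewrite NZ.
    have hp : \prod_(i < k) zN (zf e1 e2 (w i)) <= \prod_(i < k) (1 : R).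
      apply: ler_prod => i _; apply/andP; split; first by rewrite /zN addr_ge0 // sqr_ge0.
      apply: (le_trans (@zf_le e1 e2 g1 g2 o12 (w i))); rewrite ip_norm.
      by have := hw i; have := normr_ge0 (w i); nra.
    by rewrite big1_eq in hp.
  move: hZ NZx; rewrite /T /zN.
  move: (Zx.1) (Zx.2) ((Z k e1 e2 w).1) ((Z k e1 e2 w).2) => a b c d h1 h2.
  have hsq : (a * c + b * d) ^+ 2 <= 1.
    have : 0 <= (a * d - b * c) ^+ 2 by rewrite sqr_ge0.
    rewrite !expr2 in h1 h2 *; nra.
  rewrite ler_norml; apply/andP; split; rewrite !expr2 in hsq; nra.
exists T; split; [|split;[|split;[|split]]].
- move=> w i a u y; rewrite /T !Zupd /zmul /zf /= !ipL; ring.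
- by move=> s w; rewrite /T Zperm.
- have [h1 h2] := @kcZ k e1 e2 g1 g2 (index_enum 'I_k).
  change (kc k T); rewrite /T.
  by apply: kc_add; apply: kc_mul => //; exact: kc_const.
- by exists x; rewrite Tx; apply/eqP; rewrite oner_eq0.
- rewrite /attains_norm_at /kform_norm Tx normr1.
  have xin : [set r : R | exists w : 'I_k -> H, (forall i, `|w i| <= 1) /\ r = `|T w|]%classic 1.
    by exists x; split; [move=> i; rewrite hx | rewrite Tx normr1].
  have ub : ubound [set r : R | exists w : 'I_k -> H, (forall i, `|w i| <= 1) /\ r = `|T w|]%classic 1.
    by move=> r [w [hw ->]]; exact: Tle.
  apply/eqP; rewrite eq_le; apply/andP; split.
    apply: sup_upper_bound => //; split; [by exists 1 | by exists 1].
  by apply: ge_sup => //; exists 1.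
Qed.
End S.

Theorem proposition4p3 (R : realType) (H : completeNormedModType R)
    (ip : H -> H -> R) (hip : inner_product_of_norm ip)
    (k : nat) (hk : (1 <= k)%N) (x : 'I_k -> H)
    (hx : forall i, `|x i| = 1) (hspan : span_dim_le2 x) :
  exists T : ('I_k -> H) -> R,
    kmultilinear T /\ ksymmetric_form T /\ kcontinuous_form T /\
    (exists w : 'I_k -> H, T w <> 0) /\ attains_norm_at T x.
Proof. exact: (@main_lemma R H ip hip k x hx hspan). Qed.
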